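(* Let $G$ be an undirected graph on $n$ vertices with double cover $H$, let $W$ be the lazy random walk matrix of $H$, and let $\sigma$ be the simplify operator. Then: (i) $\sigma\circ(c\cdot p)=c\cdot(\sigma\circ p)$ for all $p\in\mathbb{R}^{2n}_{\ge0}$ and $c\in\mathbb{R}_{\ge0}$; (ii) $\sigma\circ(a+b)\preceq\sigma\circ a+\sigma\circ b$ for all $a,b\in\mathbb{R}^{2n}_{\ge0}$; (iii) $\sigma\circ(pW)\preceq(\sigma\circ p)W$ for all $p\in\mathbb{R}^{2n}_{\ge0}$.
   Context: The double cover $H$ has vertices $v_1,v_2$ for each $v\in V_G$ and edges $\{u_1,v_2\},\{u_2,v_1\}$ for each $\{u,v\}\in E_G$. Vectors are row vectors indexed by $V_H$. $W=\frac12(I+D_H^{-1}A_H)$ with $D_H$ the degree matrix and $A_H$ the adjacency matrix of $H$. The simplify operator $\sigma:\mathbb{R}^{2n}_{\ge0}\to\mathbb{R}^{2n}_{\ge0}$ is $(\sigma\circ p)(u_1)=\max(0,p(u_1)-p(u_2))$, $(\sigma\circ p)(u_2)=\max(0,p(u_2)-p(u_1))$ for every $u\in V_G$. $x\preceq y$ means $x(v)\le y(v)$ for every coordinate $v$. *)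

(* Defs.v *)
From HB Require Import structures.
From mathcomp Require Import all_boot all_order all_algebra.
Set Implicit Arguments. Unset Strict Implicit. Unset Printing Implicit Defensive.
Import Order.TTheory GRing.Theory Num.Theory.
Local Open Scope ring_scope.

(* Vertices of G are 'I_n; G is given by an edge relation e.
   Vertices of the double cover H are indexed by 'I_(n + n):
   lshift n u  is the copy u_1,  rshift n u  is the copy u_2. *)

Section DoubleCover.
Variables (R : realFieldType) (n : nat) (e : rel 'I_n).

Definition adjH : 'M[R]_(n + n) :=
  \matrix_(i, j)
    match split i, split j with
    | inl u, inr v => (e u v)%:R
    | inr u, inl v => (e u v)%:R
    | _, _ => 0
    end.

Definition degH (i : 'I_(n + n)) : R := \sum_(j < n + n) adjH i j.

(* inverse degree matrix D_H^{-1} (entry 0^-1 = 0 for isolated vertices) *)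
Definition invdegH : 'M[R]_(n + n) := \matrix_(i, j) ((i == j)%:R * (degH i)^-1).

Definition lazyW : 'M[R]_(n + n) := 2^-1 *: (1%:M + invdegH *m adjH).

End DoubleCover.

Definition simplify (R : realFieldType) (n : nat) (p : 'rV[R]_(n + n)) : 'rV[R]_(n + n) :=
  \row_i match split i with
         | inl u => Num.max 0 (p 0 (lshift n u) - p 0 (rshift n u))
         | inr u => Num.max 0 (p 0 (rshift n u) - p 0 (lshift n u))
         end.

Definition vle (R : realFieldType) (m : nat) (x y : 'rV[R]_m) : Prop :=
  forall i, x 0 i <= y 0 i.

Definition nonneg (R : realFieldType) (m : nat) (x : 'rV[R]_m) : Prop :=
  forall i, 0 <= x 0 i.

(* Main.v *)
Require Import Defs.
From HB Require Import structures.
From mathcomp Require Import all_boot all_order all_algebra lra.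
Import Order.TTheory GRing.Theory Num.Theory.
Local Open Scope ring_scope.
Set Implicit Arguments. Unset Strict Implicit.

Lemma mx1 (R : realFieldType) (x y : R) : Num.max 0 (x + y) <= Num.max 0 x + Num.max 0 y.
Proof. case: (lerP 0 x); case: (lerP 0 y); case: (lerP 0 (x+y)); lra. Qed.
Lemma mx2 (R : realFieldType) (x y : R) : Num.max 0 (x - y) - Num.max 0 (y - x) = x - y.
Proof. case: (lerP 0 (x-y)); case: (lerP 0 (y-x)); lra. Qed.
Lemma mx3 (R : realFieldType) (x y : R) : 0 <= x -> 0 <= y -> Num.max 0 (x - y) <= x.
Proof. case: (lerP 0 (x-y)); lra. Qed.

Section S.
Variables (R : realFieldType) (n : nat) (e : rel 'I_n).

Definition sw (i : 'I_(n + n)) : 'I_(n + n) :=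
  match split i with inl u => rshift n u | inr u => lshift n u end.

Lemma split_l (u : 'I_n) : split (lshift n u) = inl u.
Proof. exact: (unsplitK (inl u)). Qed.
Lemma split_r (u : 'I_n) : split (rshift n u) = inr u.
Proof. exact: (unsplitK (inr u)). Qed.

Lemma ordLR (i : 'I_(n + n)) :
  (exists u, i = lshift n u) \/ (exists u, i = rshift n u).
Proof.
by case: (split_ordP i) => u ->; [left|right]; exists u.
Qed.

Lemma swK : involutive sw.
Proof.
move=> i; case: (ordLR i) => -[u ->]; by rewrite /sw ?split_l ?split_r /= ?split_l ?split_r.
Qed.

Lemma sw_inj : injective sw. Proof. exact: inv_inj swK. Qed.

Lemma simpE (p : 'rV[R]_(n + n)) i :
  simplify p 0 i = Num.max 0 (p 0 i - p 0 (sw i)).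
Proof.
rewrite mxE /sw. by case: (ordLR i) => -[u ->]; rewrite ?split_l ?split_r.
Qed.

Lemma adj_ll u v : adjH R e (lshift n u) (lshift n v) = 0.
Proof. by rewrite mxE split_l split_l. Qed.
Lemma adj_rr u v : adjH R e (rshift n u) (rshift n v) = 0.
Proof. by rewrite mxE split_r split_r. Qed.
Lemma adj_lr u v : adjH R e (lshift n u) (rshift n v) = (e u v)%:R.
Proof. by rewrite mxE split_l split_r. Qed.
Lemma adj_rl u v : adjH R e (rshift n u) (lshift n v) = (e u v)%:R.
Proof. by rewrite mxE split_r split_l. Qed.

Lemma adj_sw i j : adjH R e (sw i) (sw j) = adjH R e i j.
Proof.
rewrite /sw.
by case: (ordLR i) => -[u ->]; case: (ordLR j) => -[v ->];
  rewrite ?split_l ?split_r ?adj_ll ?adj_rr ?adj_lr ?adj_rl.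
Qed.

Lemma adj_ge0 i j : 0 <= adjH R e i j.
Proof.
by case: (ordLR i) => -[u ->]; case: (ordLR j) => -[v ->];
  rewrite ?adj_ll ?adj_rr ?adj_lr ?adj_rl ?ler0n.
Qed.

Lemma deg_sw i : degH R e (sw i) = degH R e i.
Proof.
rewrite /degH (reindex_inj sw_inj) /=.
by apply: eq_bigr => j _; rewrite adj_sw.
Qed.

Lemma deg_ge0 i : 0 <= degH R e i.
Proof. by apply: sumr_ge0 => j _; apply: adj_ge0. Qed.

Lemma W_entry i j : lazyW R e i j =
  2^-1 * ((i == j)%:R + (degH R e i)^-1 * adjH R e i j).
Proof.
rewrite /lazyW mxE; congr (_ * _).
rewrite mxE; congr (_ + _); first by rewrite mxE.
rewrite mxE (bigD1 i) //= big1 ?addr0; first by rewrite mxE eqxx mul1r.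
by move=> k /negbTE ki; rewrite mxE eq_sym ki mul0r mul0r.
Qed.

Lemma W_sw i j : lazyW R e (sw i) (sw j) = lazyW R e i j.
Proof.
by rewrite !W_entry adj_sw deg_sw (inj_eq sw_inj).
Qed.

Lemma W_ge0 i j : 0 <= lazyW R e i j.
Proof.
rewrite W_entry; apply: mulr_ge0; first by rewrite invr_ge0.
apply: addr_ge0; first by [].
by apply: mulr_ge0; [rewrite invr_ge0 deg_ge0|apply: adj_ge0].
Qed.

Lemma mulW_sw (r : 'rV[R]_(n + n)) j :
  (r *m lazyW R e) 0 (sw j) = \sum_i r 0 (sw i) * lazyW R e i j.
Proof.
rewrite mxE (reindex_inj sw_inj) /=.
by apply: eq_bigr => i _; rewrite W_sw.
Qed.

Lemma mulW_diff (r : 'rV[R]_(n + n)) j :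
  (r *m lazyW R e) 0 j - (r *m lazyW R e) 0 (sw j) =
  \sum_i (r 0 i - r 0 (sw i)) * lazyW R e i j.
Proof.
rewrite mulW_sw mxE -sumrB; apply: eq_bigr => i _; by rewrite mulrBl.
Qed.

Lemma simp_diff (p : 'rV[R]_(n + n)) i :
  simplify p 0 i - simplify p 0 (sw i) = p 0 i - p 0 (sw i).
Proof. by rewrite !simpE swK mx2. Qed.

Lemma simp_ge0 (p : 'rV[R]_(n + n)) i : 0 <= simplify p 0 i.
Proof. by rewrite simpE le_max lexx. Qed.

Lemma mulW_ge0 (r : 'rV[R]_(n + n)) j : (forall i, 0 <= r 0 i) ->
  0 <= (r *m lazyW R e) 0 j.
Proof.
move=> h; rewrite mxE; apply: sumr_ge0 => i _; apply: mulr_ge0 => //; exact: W_ge0.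
Qed.

End S.

Theorem lemma3 (R : realFieldType) (n : nat) (e : rel 'I_n)
  (e_sym : symmetric e) (e_irr : irreflexive e) :
  (forall (p : 'rV[R]_(n + n)) (c : R), nonneg p -> 0 <= c ->
      simplify (c *: p) = c *: simplify p) /\
  (forall a b : 'rV[R]_(n + n), nonneg a -> nonneg b ->
      vle (simplify (a + b)) (simplify a + simplify b)) /\
  (forall p : 'rV[R]_(n + n), nonneg p ->
      vle (simplify (p *m lazyW R e)) (simplify p *m lazyW R e)).
Proof.
split; [|split].
- move=> p c _ hc; apply/rowP => i.
  rewrite simpE [RHS]mxE simpE !mxE -mulrBr maxr_pMr // mulr0 //.
- move=> a b _ _ i; rewrite simpE [X in _ <= X]mxE !simpE !mxE.
  have -> : a 0 i + b 0 i - (a 0 (sw i) + b 0 (sw i)) =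
    (a 0 i - a 0 (sw i)) + (b 0 i - b 0 (sw i)) by rewrite opprD addrACA.
  exact: mx1.
- move=> p _ j; rewrite simpE mulW_diff.
  under eq_bigr => i _ do rewrite -simp_diff.
  rewrite -mulW_diff; apply: mx3; apply: mulW_ge0 => i; exact: simp_ge0.
Qed.
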